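(* Let $\phi:M_2\to M_2$ be a linear map with $\sigma_{\mathcal{K}}(\phi(A))=\sigma_{\mathcal{K}}(A)$ for all $A\in M_2$. Then there exist $b\ge 0$ and signs $s,t\in\{1,-1\}$ such that $$\phi(E_{21})=\begin{bmatrix} s\sqrt{b^2+b} & -t\,b\\ t(b+1) & -s\sqrt{b^2+b}\end{bmatrix}.$$
   Context: $M_2$: real $2\times2$ matrices; $E_{21}$ is the matrix with $1$ in position $(2,1)$ and $0$ elsewhere. Lorentz cone $\mathcal{K}=\{(x_1,x_2)^T:|x_1|\le x_2\}$; a real $\lambda$ is an L-eigenvalue of $A$ if there is a nonzero $x\in\mathcal{K}$ with $(A-\lambda I)x\in\mathcal{K}$ and $x^T(A-\lambda I)x=0$; $\sigma_{\mathcal{K}}(A)$ is the set of L-eigenvalues. *)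

(* Defs.v *)
From HB Require Import structures.
From mathcomp Require Import all_boot all_order all_algebra.
Set Implicit Arguments. Unset Strict Implicit. Unset Printing Implicit Defensive.
Import Order.TTheory GRing.Theory Num.Theory.
Local Open Scope ring_scope.

Definition lorentz {R : realDomainType} (x : 'cV[R]_2) : Prop :=
  `|x ord0 ord0| <= x (lift ord0 ord0) ord0.

Definition L_eig {R : realDomainType} (A : 'M[R]_2) (lam : R) : Prop :=
  exists x : 'cV[R]_2, x != 0 /\ lorentz x /\
    lorentz ((A - lam%:M) *m x) /\ (x^T *m ((A - lam%:M) *m x)) = 0.

Definition L_spec {R : realDomainType} (A : 'M[R]_2) : R -> Prop := L_eig A.

Definition E21 {R : realDomainType} : 'M[R]_2 := delta_mx (lift ord0 ord0) ord0.

(* Main.v *)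
Require Import Defs.
From HB Require Import structures.
From mathcomp Require Import all_boot all_order all_algebra.
From mathcomp Require Import reals.
From mathcomp Require Import ring lra.
Import Order.TTheory GRing.Theory Num.Theory.
Set Implicit Arguments.
Local Open Scope ring_scope.

Section S.
Variable R : rcfType.

Definition Peig (al be ga de lam : R) := exists u v : R,
  0 <= u /\ 0 <= v /\ 0 < u + v /\ 0 <= (al - lam) * u + ga * v /\
  0 <= de * u + (be - lam) * v /\ u * ((al - lam) * u + ga * v) = 0 /\
  v * (de * u + (be - lam) * v) = 0.

Lemma Peig_swap al be ga de lam : Peig al be ga de lam -> Peig be al de ga lam.
Proof.
case=> u [v [u0 [v0 [uv [w1 [w2 [c1 c2]]]]]]].
exists v; exists u; do !split => //; [rewrite addrC | rewrite addrC | rewrite addrC | rewrite addrC c2 | rewrite addrC c1] => //.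
Qed.

Lemma Peig_case1 al be ga de lam : 0 < de -> ga < 0 -> Peig al be ga de lam ->
  lam <= al /\ (lam = al \/ (al - lam) * (be - lam) = ga * de).
Proof.
move=> hd hg [u [v [u0 [v0 [uv [w1 [w2 [c1 c2]]]]]]]].
have [v0'|vpos] := eqVneq v 0.
  move: c1; rewrite v0' mulr0 addr0 addr0 in uv *.
  move=> /eqP; rewrite mulf_eq0 => /orP[/eqP u00|]; first by move: uv; rewrite u00 ltxx.
  rewrite mulf_eq0 => /orP[/eqP h|/eqP u00]; last by move: uv; rewrite u00 ltxx.
  split; [lra | left; lra].
have vp : 0 < v by rewrite lt_def vpos v0.
move: c2 => /eqP; rewrite mulf_eq0 (negbTE vpos) /= => /eqP e2.
have [u00|upos] := eqVneq u 0.
  exfalso; move: w1; rewrite u00 mulr0 add0r => h. nra.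
have up : 0 < u by rewrite lt_def upos u0.
move: c1 => /eqP; rewrite mulf_eq0 (negbTE upos) /= => /eqP e1.
have hl : lam < al by nra.
split; first lra.
right.
have : ((al - lam) * (be - lam) - ga * de) * (u * v) = 0.
  have -> : ((al - lam) * (be - lam) - ga * de) * (u * v) =
     ((al - lam) * u) * ((be - lam) * v) - (ga * v) * (de * u) by ring.
  have -> : (al - lam) * u = - (ga * v) by lra.
  have -> : (be - lam) * v = - (de * u) by lra.
  ring.
move=> /eqP; rewrite mulf_eq0 => /orP[/eqP h|]; first lra.
rewrite mulf_eq0 (negbTE upos) (negbTE vpos) //.
Qed.

Lemma Peig_case2 al be ga de lam : 0 < ga -> de < 0 -> Peig al be ga de lam ->
  lam <= be /\ (lam = be \/ (al - lam) * (be - lam) = ga * de).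
Proof.
move=> hg hd /Peig_swap /(Peig_case1 hg hd) [h1 [h2|h2]]; split => //; first by left.
by right; rewrite mulrC h2 mulrC.
Qed.

Lemma Peig_d1 al be ga de : 0 <= de -> Peig al be ga de al.
Proof.
move=> hd; exists 1; exists 0; rewrite subrr !mulr0 !mul0r ?mulr1 ?addr0 ?add0r.
do !split => //; lra.
Qed.

Lemma Peig_d2 al be ga de : 0 <= ga -> Peig al be ga de be.
Proof. by move=> hg; apply: Peig_swap; apply: Peig_d1. Qed.

Lemma Peig_ray al be ga de lam : Peig al be ga de lam -> exists u v : R,
  0 <= u /\ 0 <= v /\ 0 < u + v /\
  al * u ^+ 2 + (ga + de) * (u * v) + be * v ^+ 2 = lam * (u ^+ 2 + v ^+ 2).
Proof.
case=> u [v [u0 [v0 [uv [w1 [w2 [c1 c2]]]]]]].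
exists u; exists v; do !split => //.
apply/eqP; rewrite -subr_eq0; apply/eqP.
rewrite -[RHS](_ : u * ((al - lam) * u + ga * v) + v * (de * u + (be - lam) * v) = 0);
  last by rewrite c1 c2 addr0.
ring.
Qed.

Lemma sq_pos (u v : R) : 0 <= u -> 0 <= v -> 0 < u + v -> 0 < u ^+ 2 + v ^+ 2.
Proof.
move=> u0 v0 uv.
have h1 : 0 < (u + v) * (u + v) by apply: mulr_gt0.
have h2 : 0 <= u * v by apply: mulr_ge0.
have -> : u ^+ 2 + v ^+ 2 = (u + v) * (u + v) - 2 * (u * v) by ring.
nra.
Qed.

Lemma scalar_main al be ga de :
  (forall lam, Peig al be ga de lam -> lam = 0 \/ lam = 1/2) ->
  Peig al be ga de 0 -> Peig al be ga de (1/2) ->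
  (forall lam, Peig (-al) (-be) (-ga) (-de) lam -> lam = 0 \/ lam = 1/2) ->
  Peig (-al) (-be) (-ga) (-de) 0 -> Peig (-al) (-be) (-ga) (-de) (1/2) ->
  al + be = 0 /\ al * be = ga * de /\
  ((al = 1/2 /\ 0 < de /\ ga < 0) \/ (al = -(1/2) /\ 0 < ga /\ de < 0)).
Proof.
move=> S1 P0 P1 S2 Q0 Q1.
have caseA : 0 <= ga -> 0 <= de -> False.
  move=> hg hd.
  have ha : 0 <= al by have [->|->] := S1 _ (@Peig_d1 al be ga de hd); lra.
  have hb : 0 <= be by have [->|->] := S1 _ (@Peig_d2 al be ga de hg); lra.
  have [u [v [u0 [v0 [uv e]]]]] := Peig_ray Q1.
  have := @sq_pos u v u0 v0 uv.
  have : 0 <= al * u ^+ 2 + (ga + de) * (u * v) + be * v ^+ 2.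
    apply: addr_ge0; [apply: addr_ge0|]; apply: mulr_ge0 => //; nra.
  nra.
have caseB : ga <= 0 -> de <= 0 -> False.
  move=> hg hd.
  have ha : al <= 0.
    have hd' : 0 <= - de by lra.
    by have [|] := S2 _ (@Peig_d1 (-al) (-be) (-ga) (-de) hd'); lra.
  have hb : be <= 0.
    have hg' : 0 <= - ga by lra.
    by have [|] := S2 _ (@Peig_d2 (-al) (-be) (-ga) (-de) hg'); lra.
  have [u [v [u0 [v0 [uv e]]]]] := Peig_ray P1.
  have := @sq_pos u v u0 v0 uv.
  have : 0 <= - al * u ^+ 2 + (- ga + - de) * (u * v) + - be * v ^+ 2.
    apply: addr_ge0; [apply: addr_ge0|]; apply: mulr_ge0 => //; nra.
  nra.
have case3 : 0 < de -> ga < 0 -> al + be = 0 /\ al * be = ga * de /\ al = 1/2.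
  move=> hd hg.
  have [h1 _] := Peig_case1 hd hg P1.
  have ha : al = 1/2 by have [|] := S1 _ (@Peig_d1 al be ga de (ltW hd)); lra.
  have hg' : 0 < - ga by lra.
  have hd' : - de < 0 by lra.
  have [h2 _] := Peig_case2 hg' hd' Q1.
  have hb : be = -(1/2).
    by have [|] := S2 _ (@Peig_d2 (-al) (-be) (-ga) (-de) (ltW hg')); lra.
  have [_ [h3|h3]] := Peig_case1 hd hg P0; first lra.
  split; first lra; split => //; move: h3; rewrite !subr0 //.
have case4 : 0 < ga -> de < 0 -> al + be = 0 /\ al * be = ga * de /\ al = -(1/2).
  move=> hg hd.
  have [h1 _] := Peig_case2 hg hd P1.
  have hb : be = 1/2 by have [|] := S1 _ (@Peig_d2 al be ga de (ltW hg)); lra.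
  have hg' : - ga < 0 by lra.
  have hd' : 0 < - de by lra.
  have [h2 _] := Peig_case1 hd' hg' Q1.
  have ha : al = -(1/2).
    by have [|] := S2 _ (@Peig_d1 (-al) (-be) (-ga) (-de) (ltW hd')); lra.
  have [_ [h3|h3]] := Peig_case2 hg hd P0; first lra.
  split; first lra; split => //; move: h3; rewrite !subr0 //.
have [hg|hg] := leP 0 ga; have [hd|hd] := leP 0 de.
- by exfalso; apply: caseA.
- have [g0|gp] := eqVneq ga 0.
    by exfalso; apply: caseB; lra.
  have gp' : 0 < ga by rewrite lt_def gp hg.
  have [? [? ?]] := case4 gp' hd; split => //; split => //; right; split => //.
- have [d0|dp] := eqVneq de 0.
    by exfalso; apply: caseB; lra.
  have dp' : 0 < de by rewrite lt_def dp hd.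
  have [? [? ?]] := case3 dp' hg; split => //; split => //; left; split => //.
- by exfalso; apply: caseB; lra.
Qed.

Notation i0 := (ord0 : 'I_2).
Notation i1 := (lift ord0 ord0 : 'I_2).

Lemma sum2 (F : 'I_2 -> R) : \sum_(j < 2) F j = F i0 + F i1.
Proof. by rewrite big_ord_recl big_ord1. Qed.

Lemma mul0E (A : 'M[R]_2) (lam : R) (x : 'cV[R]_2) :
  ((A - lam%:M) *m x) i0 ord0 = (A i0 i0 - lam) * x i0 ord0 + A i0 i1 * x i1 ord0.
Proof. by rewrite mxE sum2 !mxE /= mulr1n mulr0n subr0. Qed.
Lemma mul1E (A : 'M[R]_2) (lam : R) (x : 'cV[R]_2) :
  ((A - lam%:M) *m x) i1 ord0 = A i1 i0 * x i0 ord0 + (A i1 i1 - lam) * x i1 ord0.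
Proof. by rewrite mxE sum2 !mxE /= mulr1n mulr0n subr0. Qed.

Lemma dotE (x y : 'cV[R]_2) : (x^T *m y) ord0 ord0 = x i0 ord0 * y i0 ord0 + x i1 ord0 * y i1 ord0.
Proof. by rewrite mxE sum2 !mxE. Qed.

Lemma ord2P (P : 'I_2 -> Prop) : P i0 -> P i1 -> forall i, P i.
Proof. move=> H0 H1 [[|[|k]] Hk] //.
 - by have -> : Ordinal Hk = i0 by apply/val_inj.
 - by have -> : Ordinal Hk = i1 by apply/val_inj.
Qed.

Definition alc (A : 'M[R]_2) := (A i0 i0 + A i0 i1 + A i1 i0 + A i1 i1) / 2.
Definition bec (A : 'M[R]_2) := (A i0 i0 - A i0 i1 - A i1 i0 + A i1 i1) / 2.
Definition gac (A : 'M[R]_2) := (A i0 i1 + A i1 i1 - A i0 i0 - A i1 i0) / 2.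
Definition dec (A : 'M[R]_2) := (A i1 i0 + A i1 i1 - A i0 i0 - A i0 i1) / 2.


Lemma L_eig_Peig (A : 'M[R]_2) lam :
  L_eig A lam -> Peig (alc A) (bec A) (gac A) (dec A) lam.
Proof.
case=> x [xn0 [lx [ly hd]]].
move: lx ly hd; rewrite /lorentz mul0E mul1E => lx ly /(congr1 (fun M : 'M[R]_1 => M ord0 ord0)).
rewrite dotE mul0E mul1E !mxE => hd.
move: lx ly; rewrite !ler_norml => /andP[lx1 lx2] /andP[ly1 ly2].
set x0 : R := x i0 ord0 in lx1 lx2 hd ly1 ly2 *.
set x1 : R := x i1 ord0 in lx1 lx2 hd ly1 ly2 *.
have x1pos : 0 < x1.
  rewrite lt_def; apply/andP; split; last by lra.
  apply/negP => /eqP h1; move: xn0 => /negP; apply; apply/eqP/matrixP => i j.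
  rewrite (ord1 j) mxE; move: i; apply: ord2P; rewrite -/x1 ?h1 //.
  rewrite -/x0; lra.
have [y0 ey0] : exists y0, y0 = (A i0 i0 - lam) * x0 + A i0 i1 * x1 by eexists.
have [y1 ey1] : exists y1, y1 = A i1 i0 * x0 + (A i1 i1 - lam) * x1 by eexists.
move: ly1 ly2 hd; rewrite -ey0 -ey1 => ly1 ly2 hd.
have e1 : (alc A - lam) * ((x1 + x0) / 2) + gac A * ((x1 - x0) / 2) = (y0 + y1) / 2.
  rewrite ey0 ey1 /alc /gac; by field.
have e2 : dec A * ((x1 + x0) / 2) + (bec A - lam) * ((x1 - x0) / 2) = (y1 - y0) / 2.
  rewrite ey0 ey1 /bec /dec; by field.
have p1 : 0 <= (x1 + x0) / 2 * ((y0 + y1) / 2) by apply: mulr_ge0; lra.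
have p2 : 0 <= (x1 - x0) / 2 * ((y1 - y0) / 2) by apply: mulr_ge0; lra.
have s0 : (x1 + x0) / 2 * ((y0 + y1) / 2) + (x1 - x0) / 2 * ((y1 - y0) / 2) = 0.
  transitivity ((x0 * y0 + x1 * y1) / 2); first by field.
  by rewrite hd mul0r.
rewrite /Peig; exists ((x1 + x0) / 2); exists ((x1 - x0) / 2); rewrite e1 e2.
do !split; lra.
Qed.

Lemma Peig_L_eig (A : 'M[R]_2) lam :
  Peig (alc A) (bec A) (gac A) (dec A) lam -> L_eig A lam.
Proof.
case=> u [v [u0 [v0 [uv [w1 [w2 [c1 c2]]]]]]].
pose x : 'cV[R]_2 := \col_i (if i == i0 then u - v else u + v).
have ex0 : x i0 ord0 = u - v by rewrite mxE.
have ex1 : x i1 ord0 = u + v by rewrite mxE.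
exists x; split.
  apply/negP => /eqP /(congr1 (fun M : 'cV[R]_2 => M i1 ord0)); rewrite ex1 mxE => h; lra.
rewrite /lorentz mul0E mul1E ex0 ex1; split; first by rewrite ler_norml; apply/andP; split; lra.
have e1 : (A i0 i0 - lam) * (u - v) + A i0 i1 * (u + v) + (A i1 i0 * (u - v) + (A i1 i1 - lam) * (u + v))
   = 2 * ((alc A - lam) * u + gac A * v) by rewrite /alc /gac; by field.
have e2 : (A i1 i0 * (u - v) + (A i1 i1 - lam) * (u + v)) - ((A i0 i0 - lam) * (u - v) + A i0 i1 * (u + v))
   = 2 * (dec A * u + (bec A - lam) * v) by rewrite /dec /bec; by field.
split; first by rewrite ler_norml; apply/andP; split; lra.
apply/matrixP => i j; rewrite (ord1 i) (ord1 j) dotE mul0E mul1E ex0 ex1 !mxE.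
have e3 : (u - v) * ((A i0 i0 - lam) * (u - v) + A i0 i1 * (u + v)) +
  (u + v) * (A i1 i0 * (u - v) + (A i1 i1 - lam) * (u + v)) =
  2 * (u * ((alc A - lam) * u + gac A * v)) + 2 * (v * (dec A * u + (bec A - lam) * v)).
  rewrite /alc /bec /gac /dec; by field.
by rewrite e3 c1 c2 !mulr0 addr0.
Qed.


Lemma coefN (A : 'M[R]_2) : alc (- A) = - alc A /\ bec (- A) = - bec A /\
  gac (- A) = - gac A /\ dec (- A) = - dec A.
Proof. rewrite /alc /bec /gac /dec !mxE; do !split; by field. Qed.

Lemma coefE21 : alc (E21 : 'M[R]_2) = 1/2 /\ bec (E21 : 'M[R]_2) = -(1/2) /\
  gac (E21 : 'M[R]_2) = -(1/2) /\ dec (E21 : 'M[R]_2) = 1/2.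
Proof. rewrite /alc /bec /gac /dec /E21 !mxE /=; do !split; by field. Qed.

Lemma B0_spec lam : Peig (1/2) (-(1/2)) (-(1/2)) (1/2) lam -> lam = 0 \/ lam = 1/2.
Proof.
move=> h; have hd : 0 < 1/2 :> R by lra.
have hg : -(1/2) < 0 :> R by lra.
have [h1 [h2|h2]] := Peig_case1 hd hg h; [by right | left; nra].
Qed.

Lemma nB0_spec lam : Peig (-(1/2)) (-(-(1/2))) (-(-(1/2))) (-(1/2)) lam -> lam = 0 \/ lam = 1/2.
Proof.
rewrite opprK => h; have hg : 0 < 1/2 :> R by lra.
have hd : -(1/2) < 0 :> R by lra.
have [h1 [h2|h2]] := Peig_case2 hg hd h; [by right | left; nra].
Qed.

Lemma B0_mem : Peig (1/2) (-(1/2)) (-(1/2)) (1/2) 0 /\ Peig (1/2) (-(1/2)) (-(1/2)) (1/2) (1/2)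
  /\ Peig (-(1/2)) (-(-(1/2))) (-(-(1/2))) (-(1/2)) 0 /\ Peig (-(1/2)) (-(-(1/2))) (-(-(1/2))) (-(1/2)) (1/2).
Proof.
split; first by exists 1; exists 1; rewrite !subr0 !mulr1; do !split; lra.
split; first by apply: Peig_d1; lra.
split; first by exists 1; exists 1; rewrite !subr0 !mulr1; do !split; lra.
rewrite opprK; apply: Peig_d2; lra.
Qed.

End S.
Arguments Peig {R} _ _ _ _ _.
Arguments alc {R} _.
Arguments bec {R} _.
Arguments gac {R} _.
Arguments dec {R} _.
Arguments L_eig_Peig {R A lam}.
Arguments Peig_L_eig {R A lam}.
Arguments coefN {R} A.
Arguments B0_spec {R lam}.
Arguments nB0_spec {R lam}.
Notation i0 := (ord0 : 'I_2).
Notation i1 := (lift ord0 ord0 : 'I_2).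

Theorem lemma4p5 (R : realType) (phi : {linear 'M[R]_2 -> 'M[R]_2}) :
  (forall A : 'M[R]_2, forall lam : R, L_spec (phi A) lam <-> L_spec A lam) ->
  exists b : R, exists s t : R,
    0 <= b /\ (s = 1 \/ s = -1) /\ (t = 1 \/ t = -1) /\
    phi E21 = \matrix_(i < 2, j < 2)
      (if i == ord0 then
         (if j == ord0 then s * Num.sqrt (b ^+ 2 + b) else - (t * b))
       else
         (if j == ord0 then t * (b + 1) else - (s * Num.sqrt (b ^+ 2 + b)))).
Proof.
move=> H.
set M := phi E21.
have eqv0 : forall lam, Peig (alc M) (bec M) (gac M) (dec M) lam <->
    Peig (alc E21) (bec E21) (gac E21) (dec E21) lam.
  move=> lam; split => h.
    by apply: L_eig_Peig; apply/(H E21 lam); apply: Peig_L_eig.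
  by apply: L_eig_Peig; apply/(H E21 lam); apply: Peig_L_eig.
have eqvN0 : forall lam, Peig (alc (- M)) (bec (- M)) (gac (- M)) (dec (- M)) lam <->
    Peig (alc (- E21)) (bec (- E21)) (gac (- E21)) (dec (- E21)) lam.
  have eM : - M = phi (- E21) by rewrite raddfN.
  move=> lam; split => h.
    by apply: L_eig_Peig; apply/(H (- E21) lam); rewrite -eM; apply: Peig_L_eig.
  by apply: L_eig_Peig; rewrite eM; apply/(H (- E21) lam); apply: Peig_L_eig.
have [e1 [e2 [e3 e4]]] := @coefE21 R.
have [f1 [f2 [f3 f4]]] := coefN M.
have [g1 [g2 [g3 g4]]] := coefN (E21 : 'M[R]_2).
have eqv := eqv0; rewrite e1 e2 e3 e4 in eqv.
have eqvN := eqvN0; rewrite f1 f2 f3 f4 g1 g2 g3 g4 e1 e2 e3 e4 in eqvN.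
have [m0 [m1 [m2 m3]]] := @B0_mem R.
have := @scalar_main R (alc M) (bec M) (gac M) (dec M).
move=> /(_ (fun lam h => B0_spec (proj1 (eqv lam) h))).
move=> /(_ (proj2 (eqv 0) m0) (proj2 (eqv (1/2)) m1)).
move=> /(_ (fun lam h => nB0_spec (proj1 (eqvN lam) h))).
move=> /(_ (proj2 (eqvN 0) m2) (proj2 (eqvN (1/2)) m3)).
rewrite /alc /bec /gac /dec.
set a := M i0 i0; set b := M i0 i1; set c := M i1 i0; set d := M i1 i1.
move=> [hs [hp hc]].
have hd : d = - a by lra.
have hsa : forall x : R, (if 0 <= x then 1 else -1) * `|x| = x.
  move=> x; case: ifP => hx; first by rewrite ger0_norm // mul1r.
  by rewrite ltr0_norm ?mulN1r ?opprK // ltNge hx.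
case: hc => [[h1 [h2 h3]] | [h1 [h2 h3]]].
- have ec : c = 1 - b by lra.
  rewrite hd ec in hp h2 h3.
  have hq : (- b) ^+ 2 + - b = a ^+ 2 by nra.
  have hsq : Num.sqrt ((- b) ^+ 2 + - b) = `|a| by rewrite hq sqrtr_sqr.
  exists (- b); exists (if 0 <= a then 1 else -1); exists 1.
  split; first by nra.
  split; first by case: ifP; [left|right].
  split; first by left.
  apply/matrixP; move=> i j; move: i j; apply: ord2P; apply: ord2P; rewrite !mxE /=. all: try rewrite hsq. all: try rewrite hsa.
  all: rewrite -/a -/b -/c -/d.
  + by [].
  + by rewrite mul1r opprK.
  + by rewrite ec mul1r addrC.
  + by rewrite hd.
- have ec : c = -1 - b by lra.
  rewrite hd ec in hp h2 h3.
  have hq : b ^+ 2 + b = a ^+ 2 by nra.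
  have hsq : Num.sqrt (b ^+ 2 + b) = `|a| by rewrite hq sqrtr_sqr.
  exists b; exists (if 0 <= a then 1 else -1); exists (-1).
  split; first by nra.
  split; first by case: ifP; [left|right].
  split; first by right.
  apply/matrixP; move=> i j; move: i j; apply: ord2P; apply: ord2P; rewrite !mxE /=. all: try rewrite hsq. all: try rewrite hsa.
  all: rewrite -/a -/b -/c -/d.
  + by [].
  + by rewrite mulN1r opprK.
  + by rewrite ec mulN1r opprD addrC.
  + by rewrite hd.
Qed.
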